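(* Let $k \geq 2$, $n \geq 1$, $\Sigma_k = \{0,1,\ldots,k-1\}$, and let $u \in \Sigma_k^n$ be primitive. Define the word $f_u$ symbol by symbol as follows: $f_u[i] = u[i]$ for $1 \leq i \leq n$; for $i \geq n+1$, if $f_u[i-n+1..i-1] = 0^{n-1}$ the construction terminates, and otherwise $f_u[i]$ is the smallest letter of $\Sigma_k$ such that $f_u[i-n+1..i]$ is primitive (such a letter always exists). Then $f_u$ is finite, i.e. the construction terminates after finitely many steps.
   Context: A word $w$ is primitive if there is no word $x$ and integer $p \geq 2$ with $w = x^p$. For a word $w$, $w[i]$ denotes its $i$-th symbol and $w[i..j] = w[i]w[i+1]\cdots w[j]$. *)

(* Defs.v *)
From mathcomp Require Import all_boot.
Set Implicit Arguments. Unset Strict Implicit. Unset Printing Implicit Defensive.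

(* Words over Sigma_k = {0,...,k-1} are represented as seq nat whose letters are < k. *)

Definition primitive (w : seq nat) : Prop :=
  ~ exists (x : seq nat) (p : nat), 2 <= p /\ w = flatten (nseq p x).

(* The len symbols immediately preceding (0-indexed) position i of f,
   i.e. f[i-len .. i-1]  (in 1-indexed terms, f[i-len+1 .. i] for position i+1). *)
Definition window (f : seq nat) (i len : nat) : seq nat :=
  take len (drop (i - len) f).

Definition fu_terminated (k n : nat) (u f : seq nat) : Prop :=
  [/\ n <= size f,
      take n f = u,
      (forall i, n <= i < size f ->
         let w := window f i n.-1 in
         let a := nth 0 f i in
         [/\ w <> nseq n.-1 0,
             a < k,
             primitive (rcons w a)
           & forall b, b < a -> ~ primitive (rcons w b)])
    & window f (size f) n.-1 = nseq n.-1 0].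

(* Main.v *)
Require Import Defs.
From mathcomp Require Import all_boot.
From mathcomp Require Import zify.
From Stdlib Require Import Classical.
Set Implicit Arguments. Unset Strict Implicit. Unset Printing Implicit Defensive.


Definition per (w : nat -> nat) (L p : nat) := forall i, i + p < L -> w i = w (i + p).

Lemma per_mod w L p : 0 < p -> per w L p -> forall i, i < L -> w i = w (i %% p).
Proof.
move=> p0 hp i; elim/ltn_ind: i => i IH iL.
case: (ltnP i p) => hip; first by rewrite modn_small.
have e : i = (i - p) + p by rewrite subnK.
have h1 : w (i - p) = w (i - p + p) by apply: hp; lia.
rewrite e -h1 modnDr; apply: IH; lia.
Qed.

Lemma mod_per w L g : (forall i, i < L -> w i = w (i %% g)) -> per w L g.
Proof.
move=> h i hi.
have h1 := h i ltac:(lia). have h2 := h (i + g) ltac:(lia).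
by rewrite h1 h2 modnDr.
Qed.

Lemma per_le w L L' p : L' <= L -> per w L p -> per w L' p.
Proof. by move=> hL hp i hi; apply: hp; lia. Qed.

Lemma fine_wilf s : forall p q w L, p + q <= s -> 0 < p -> 0 < q ->
  per w L p -> per w L q -> p + q <= L + gcdn p q -> per w L (gcdn p q).
Proof.
elim: s => [|s IH] p q w L hs p0 q0 hp hq hL; first lia.
wlog pq : p q p0 q0 hp hq hL hs / p <= q.
  move=> H; case: (leqP p q) => h; first exact: H.
  rewrite gcdnC; apply: H => //; [by rewrite gcdnC addnC | lia | lia].
have [eq|ne] := eqVneq p q.
  by subst q; rewrite gcdnn.
have ltpq : p < q by lia.
have gq : gcdn p (q - p) = gcdn p q by rewrite -{2}(subnKC pq) gcdnDl.
have hg : gcdn p q <= q - p.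
  by apply: dvdn_leq; [lia | apply: dvdn_sub; [exact: dvdn_gcdr | exact: dvdn_gcdl]].
have hp' : per w (L - p) p by apply: per_le hp; lia.
have hqp : per w (L - p) (q - p).
  move=> i hi.
  have h1 : w i = w (i + q) by apply: hq; lia.
  have h2 : w (i + (q - p)) = w (i + (q - p) + p) by apply: hp; lia.
  have e : i + (q - p) + p = i + q by lia.
  by rewrite h1 h2 e.
have g0 : 0 < gcdn p (q - p) by rewrite gcdn_gt0 p0.
have IH' := IH p (q - p) w (L - p) ltac:(lia) p0 ltac:(lia) hp' hqp ltac:(rewrite gq; lia).
rewrite gq in IH' g0.
apply: mod_per => i hi.
rewrite (per_mod p0 hp hi).
have him : i %% p < L - p by have := ltn_pmod i p0; lia.
by rewrite (per_mod g0 IH' him) modn_dvdm // dvdn_gcdl.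
Qed.

Lemma mod_sub a d g : g %| d -> d <= a -> (a - d) %% g = a %% g.
Proof.
move=> gd da; apply/eqP; rewrite eq_sym eqn_mod_dvd; last lia.
by have -> : a - (a - d) = d by lia.
Qed.

Lemma two_periods A B n d e : 0 < d -> 0 < e -> d + e <= n ->
  per A n d -> per B n e -> (forall j, j < n.-1 -> A j = B j) ->
  A n.-1 = B n.-1.
Proof.
move=> d0 e0 hn hA hB hAB.
have hAd : per A n.-1 d by apply: per_le hA; lia.
have hAe : per A n.-1 e.
  move=> i hi.
  have h1 := hAB i ltac:(lia). have h2 := hAB (i + e) ltac:(lia).
  have h3 := hB i ltac:(lia).
  by rewrite h1 h2 h3.
have g0 : 0 < gcdn d e by rewrite gcdn_gt0 d0.
have hg := fine_wilf (leqnn _) d0 e0 hAd hAe ltac:(lia).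
have e1 : A n.-1 = A (n.-1 - d).
  have := hA (n.-1 - d) ltac:(lia). by have -> : n.-1 - d + d = n.-1 by lia.
have e2 : B n.-1 = B (n.-1 - e).
  have := hB (n.-1 - e) ltac:(lia). by have -> : n.-1 - e + e = n.-1 by lia.
have e3 := hAB (n.-1 - e) ltac:(lia).
rewrite e1 e2 -e3.
rewrite (per_mod g0 hg (i:=n.-1 - d) ltac:(lia)) (per_mod g0 hg (i:=n.-1 - e) ltac:(lia)).
have m1 : (n.-1 - d) %% gcdn d e = n.-1 %% gcdn d e by apply: mod_sub; [exact: dvdn_gcdl | lia].
have m2 : (n.-1 - e) %% gcdn d e = n.-1 %% gcdn d e by apply: mod_sub; [exact: dvdn_gcdr | lia].
by rewrite m1 m2.
Qed.

Lemma NT n d e : 0 < d -> 0 < e -> d %| n -> e %| n -> 2 * d <= n -> 2 * e <= n ->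
  d + e + minn d e <= n + gcdn d e.
Proof.
wlog de : d e / d <= e.
  move=> H d0 e0 dn en d2 e2; case: (boolP (d <= e)) => h.
    exact: (H d e h d0 e0 dn en d2 e2).
  have := H e d ltac:(lia) e0 d0 en dn e2 d2.
  by rewrite gcdnC minnC (addnC e).
move=> d0 e0 dn en d2 e2.
have g0 : 0 < gcdn d e by rewrite gcdn_gt0 d0.
have [dde|ndde] := boolP (d %| e).
  have -> : gcdn d e = d by apply/gcdn_idPl.
  lia.
case: (leqP (2 * e + d) n) => hn; first lia.
have hne : n = 2 * e.
  have hc := divnK en.
  set c := n %/ e in hc.
  have c1 : c * e < 3 * e by lia.
  have c2 : 2 * e <= c * e by lia.
  rewrite ltn_pmul2r // in c1. rewrite leq_pmul2r // in c2.
  rewrite -hc; have -> : c = 2 by lia.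
  by [].
set g := gcdn d e.
have hd2 : d %| 2 * g.
  rewrite /g muln_gcdr dvdn_gcd dvdn_mull //= -hne //.
have hgd : g %| d by exact: dvdn_gcdl.
have hge : g %| e by exact: dvdn_gcdr.
have [a ha] : exists a, a * g = d by exists (d %/ g); exact: divnK hgd.
have [b hb] : exists b, b * g = e by exists (e %/ g); exact: divnK hge.
clear hgd hge dn en.
rewrite -ha dvdn_pmul2r // in hd2.
have a2 : a <= 2 by apply: dvdn_leq.
have a2' : a <> 0 by move=> a0; rewrite a0 in hd2.
clear hd2.
have a1 : a <> 1.
  move=> a1; apply: (negP ndde); apply/gcdn_idPl; rewrite -/g.
  by rewrite a1 mul1n in ha.
have g0' : 0 < g by [].
clearbody g.
have aa : a = 2 by lia.
rewrite aa in ha.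
have b1 : 2 * g <= b * g by lia.
rewrite leq_pmul2r // in b1.
have b2 : b <> 2.
  move=> b2; apply: (negP ndde). rewrite -ha -hb b2. exact: dvdnn.
have b3 : 3 * g <= b * g by rewrite leq_pmul2r //; lia.
lia.
Qed.

Lemma comb2 n m d e (P Q : nat -> nat) :
  0 < d -> d %| n -> 2 * d <= n -> per P n d ->
  0 < e -> e %| n -> 2 * e <= n -> per Q n e ->
  0 < m -> m < n ->
  P n.-1 = 0 ->
  (forall j, j + m < n.-1 -> Q j = P (j + m)) ->
  Q (n.-1 - m) <> 0 ->
  (forall j, n.-1 - m < j < n -> Q j = 0) -> False.
Proof.
move=> d0 dn d2 hP e0 en e2 hQ m0 mn P0 hPQ Qt Qz.
set t := n.-1 - m in Qt Qz.
have me : m < e.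
  case: (ltnP m e) => // em; exfalso.
  apply: Qt; rewrite (hQ t); last lia.
  by apply: Qz; lia.
case: (leqP d m) => dm.
  have h1 : Q (t - e) = Q t.
    have := hQ (t - e) ltac:(lia). by have -> : t - e + e = t by lia.
  have h2 : Q (t - e + d) = Q (t + d).
    have := hQ (t - e + d) ltac:(lia). by have -> : t - e + d + e = t + d by lia.
  have h3 : Q (t + d) = 0 by apply: Qz; lia.
  have h4 := hPQ (t - e) ltac:(lia).
  have h5 := hPQ (t - e + d) ltac:(lia).
  have h6 := hP (t - e + m) ltac:(lia).
  have e6 : t - e + m + d = t - e + d + m by lia.
  apply: Qt. by rewrite -h1 h4 h6 e6 -h5 h2 h3.
have te : e <= t by lia.
have td : d <= t by lia.
have hNT := NT d0 e0 dn en d2 e2.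
have hQe : per Q t e by apply: per_le hQ; lia.
have hQd : per Q t d.
  move=> i hi.
  have h1 := hPQ i ltac:(lia).
  have h2 := hPQ (i + d) ltac:(lia).
  have h3 := hP (i + m) ltac:(lia).
  have e3 : i + m + d = i + d + m by lia.
  by rewrite h1 h2 h3 e3.
have g0 : 0 < gcdn d e by rewrite gcdn_gt0 d0.
have hg := fine_wilf (leqnn _) d0 e0 hQd hQe ltac:(lia).
have q1 : Q (t - d) = 0.
  have h1 := hPQ (t - d) ltac:(lia).
  have h2 := hP (n.-1 - d) ltac:(lia).
  have e1 : t - d + m = n.-1 - d by lia.
  have e2' : n.-1 - d + d = n.-1 by lia.
  by rewrite h1 e1 h2 e2'.
have q2 : Q (t - e) = Q t.
  have := hQ (t - e) ltac:(lia). by have -> : t - e + e = t by lia.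
apply: Qt; rewrite -q2 -q1.
rewrite (per_mod g0 hg (i:=t - d) ltac:(lia)) (per_mod g0 hg (i:=t - e) ltac:(lia)).
have m1 : (t - d) %% gcdn d e = t %% gcdn d e by apply: mod_sub; [exact: dvdn_gcdl | exact: td].
have m2 : (t - e) %% gcdn d e = t %% gcdn d e by apply: mod_sub; [exact: dvdn_gcdr | exact: te].
by rewrite m1 m2.
Qed.


Lemma size_window f i len : len <= i <= size f -> size (window f i len) = len.
Proof. move=> /andP[h1 h2]; rewrite /window size_take size_drop; apply/minn_idPl; lia. Qed.

Lemma nth_window f i len j : len <= i <= size f -> j < len ->
  nth 0 (window f i len) j = nth 0 f (i - len + j).
Proof. by move=> h hj; rewrite /window nth_take // nth_drop. Qed.

Lemma window_rcons f a i len : len <= i <= size f -> window (rcons f a) i len = window f i len.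
Proof.
move=> h; apply: (@eq_from_nth _ 0).
  rewrite !size_window // size_rcons; lia.
move=> j; rewrite size_window ?size_rcons; last lia.
move=> hj; rewrite !nth_window ?size_rcons //; try lia.
rewrite nth_rcons; case: ifP => //; lia.
Qed.

Lemma window_zero f i len : len <= i <= size f ->
  (forall j, i - len <= j < i -> nth 0 f j = 0) -> window f i len = nseq len 0.
Proof.
move=> h hz; apply: (@eq_from_nth _ 0).
  by rewrite size_window // size_nseq.
move=> j; rewrite size_window // => hj.
rewrite nth_window // nth_nseq hj; apply: hz; lia.
Qed.

Lemma size_flat (x : seq nat) p : size (flatten (nseq p x)) = p * size x.
Proof. by elim: p => //= p IH; rewrite size_cat IH mulSn. Qed.

Lemma nth_flat (x : seq nat) p j : j + size x < p * size x ->
  nth 0 (flatten (nseq p x)) j = nth 0 (flatten (nseq p x)) (j + size x).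
Proof.
elim: p j => [|p IH] j /=; first lia.
rewrite mulSn => hj.
rewrite !nth_cat.
case: (ltnP j (size x)) => h1.
  have -> : (j + size x < size x) = false by lia.
  have -> : j + size x - size x = j by lia.
  case: p IH hj => [|p] IH hj; first lia.
  by rewrite /= nth_cat h1.
have -> : (j + size x < size x) = false by lia.
have -> : j + size x - size x = j by lia.
rewrite IH ?size_flat; last lia.
by rewrite subnK.
Qed.

Lemma power_per w : ~ primitive w -> 0 < size w ->
  exists d, [/\ 0 < d, d %| size w, 2 * d <= size w & per (nth 0 w) (size w) d].
Proof.
move=> /NNPP [x [p [p2 ->]]] hs.
rewrite size_flat in hs *.
exists (size x); split.
- by case: (size x) hs => //; rewrite muln0.
- exact: dvdn_mull.
- by rewrite leq_mul2r p2 orbT.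
- move=> i hi; exact: nth_flat.
Qed.

Lemma exists_letter k n v : 2 <= k -> 2 <= n -> size v = n.-1 ->
  exists a, [/\ a < k, primitive (rcons v a) & forall b, b < a -> ~ primitive (rcons v b)].
Proof.
move=> k2 n2 hv.
case: (classic (primitive (rcons v 0))) => h0.
  exists 0; split; [lia | exact: h0 | by case].
exists 1; split; [lia | | by case => // ? _; apply: h0].
apply: NNPP => h1.
have s0 : size (rcons v 0) = n by rewrite size_rcons hv; lia.
have s1 : size (rcons v 1) = n by rewrite size_rcons hv; lia.
have [d [d0 _ d2 hd]] := power_per h0 ltac:(lia).
have [e [e0 _ e2 he]] := power_per h1 ltac:(lia).
rewrite s0 in d2 hd. rewrite s1 in e2 he.
have := two_periods (n:=n) d0 e0 ltac:(lia) hd he.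
move=> H.
have hA : forall j, j < n.-1 -> nth 0 (rcons v 0) j = nth 0 (rcons v 1) j.
  by move=> j hj; rewrite !nth_rcons hv hj.
have := H hA.
by rewrite !nth_rcons hv ltnn eqxx.
Qed.


Definition conds k n (f : seq nat) i : Prop :=
  let w := window f i n.-1 in
  let a := nth 0 f i in
  [/\ w <> nseq n.-1 0, a < k, primitive (rcons w a)
    & forall b, b < a -> ~ primitive (rcons w b)].

Definition Partial k n u f :=
  [/\ n <= size f, take n f = u & forall i, n <= i < size f -> conds k n f i].

Lemma not_prim0 k n f i : conds k n f i -> nth 0 f i <> 0 -> ~ primitive (rcons (window f i n.-1) 0).
Proof. by case=> _ _ _ h hz; apply: h; lia. Qed.

Lemma nz_in_window k n u f i : Partial k n u f -> n <= i < size f ->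
  exists j, i - n.-1 <= j < i /\ nth 0 f j <> 0.
Proof.
move=> [h1 h2 h3] hi.
apply: NNPP => hne.
have [hw _ _ _] := h3 i hi.
apply: hw; apply: window_zero; first lia.
move=> j hj; apply: NNPP => hj'; apply: hne; exists j; split => //.
Qed.

Lemma K k n u f T S : Partial k n u f -> 2 <= n -> n <= T -> T < S -> S < size f ->
  nth 0 f T <> 0 -> (forall j, T < j < S -> nth 0 f j = 0) -> nth 0 f S = 0.
Proof.
move=> hf n2 nT TS Sf hT hz.
case: hf => [hf1 hf2 hf3].
apply: NNPP => hS.
have cT := hf3 T ltac:(lia). have cS := hf3 S ltac:(lia).
have pT := not_prim0 cT hT. have pS := not_prim0 cS hS.
set m := S - T.
have mn : m < n.
  case: (ltnP m n) => // mn; exfalso.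
  case: cS => hw _ _ _; apply: hw; apply: window_zero; first lia.
  move=> j hj; apply: hz; lia.
set wT := window f T n.-1 in pT.
set wS := window f S n.-1 in pS.
have sT : size wT = n.-1 by rewrite size_window //; lia.
have sS : size wS = n.-1 by rewrite size_window //; lia.
have s0 : size (rcons wT 0) = n by rewrite size_rcons sT; lia.
have s1 : size (rcons wS 0) = n by rewrite size_rcons sS; lia.
have [d [d0 dn d2 hd]] := power_per pT ltac:(lia).
have [e [e0 en e2 he]] := power_per pS ltac:(lia).
rewrite s0 in dn d2 hd. rewrite s1 in en e2 he.
apply: (comb2 (m:=m) d0 dn d2 hd e0 en e2 he); first lia; first lia.
- by rewrite nth_rcons sT ltnn eqxx.
- move=> j hj.
  have hj' : j < n.-1 by lia.
  rewrite !nth_rcons sT sS hj hj'.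
  rewrite !nth_window; try lia.
  congr (nth 0 f _); lia.
- rewrite nth_rcons sS.
  have -> : n.-1 - m < n.-1 by lia.
  rewrite nth_window; try lia.
  have -> : S - n.-1 + (n.-1 - m) = T by lia.
  exact: hT.
- move=> j /andP[hj1 hj2].
  rewrite nth_rcons sS.
  case: (ltnP j n.-1) => hj3.
    rewrite nth_window; try lia.
    apply: hz; lia.
  have -> : j == n.-1 by apply/eqP; lia.
  by [].
Qed.

Lemma K' k n u f T : Partial k n u f -> 2 <= n -> n <= T -> T < size f ->
  nth 0 f T <> 0 -> forall S, T < S < size f -> nth 0 f S = 0.
Proof.
move=> hf n2 nT Tf hT S; elim/ltn_ind: S => S IH hS.
apply: (K hf n2 nT); try lia.
move=> j hj; apply: IH; lia.
Qed.

Lemma bound k n u f : Partial k n u f -> 2 <= n -> forall i, i < size f -> i < 3 * n.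
Proof.
move=> hf n2 i hi.
case: (ltnP i (2 * n - 1)) => h1; first lia.
have [T1 [hT1 nzT1]] := nz_in_window hf (i:=i) ltac:(lia).
case: (ltnP T1 (2 * n - 1)) => h2; first lia.
exfalso.
have [T2 [hT2 nzT2]] := nz_in_window hf (i:=T1) ltac:(lia).
apply: nzT1; apply: (K' hf n2 (T:=T2)); lia.
Qed.

Lemma extend k n u f a : Partial k n u f -> conds k n (rcons f a) (size f) ->
  Partial k n u (rcons f a).
Proof.
case=> h1 h2 h3 hc; split.
- rewrite size_rcons; lia.
- by rewrite -cats1 takel_cat.
- move=> i; rewrite size_rcons => /andP[hi1 hi2].
  case: (ltnP i (size f)) => hi3; last by have -> : i = size f by lia.
  have [c1 c2 c3 c4] := h3 i ltac:(lia).
  have ew : window (rcons f a) i n.-1 = window f i n.-1 by apply: window_rcons; lia.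
  have en : nth 0 (rcons f a) i = nth 0 f i by rewrite nth_rcons hi3.
  by rewrite /conds ew en; split.
Qed.

Lemma n2_of f n : window f (size f) n.-1 != nseq n.-1 0 -> 2 <= n.
Proof. by case: n => [|[|n]] //; rewrite /window /= take0. Qed.

Lemma main_ext k n u B : 2 <= k -> forall f, 3 * n - size f <= B -> Partial k n u f ->
  exists f', fu_terminated k n u f'.
Proof.
move=> k2; elim: B => [|B IH] f hB hf.
all: case: (eqVneq (window f (size f) n.-1) (nseq n.-1 0)) => hw;
  first by exists f; case: hf => h1 h2 h3; split.
all: have n2 := n2_of hw.
all: have [h1 h2 h3] := hf.
all: have [a [ak ap amin]] := exists_letter (v := window f (size f) n.-1) k2 n2
       ltac:(by rewrite size_window //; lia).
all: have hf' : Partial k n u (rcons f a)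
       by apply: extend => //; rewrite /conds nth_rcons ltnn eqxx window_rcons //; [split => //; exact/eqP | lia].
all: have := bound hf' n2 (i := size f) ltac:(by rewrite size_rcons).
- lia.
- move=> hs; apply: (IH (rcons f a)) => //; rewrite size_rcons; lia.
Qed.

Theorem lemma4 (k n : nat) (u : seq nat) :
  2 <= k -> 1 <= n ->
  size u = n -> all (fun a => a < k) u ->
  primitive u ->
  exists f : seq nat, fu_terminated k n u f.
Proof.
move=> k2 n1 hu _ _.
apply: (@main_ext k n u (3 * n) k2 u); first lia.
split; first by rewrite hu.
- by rewrite -hu take_size.
- move=> i; rewrite hu => /andP[h1 h2]; lia.
Qed.
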